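(* Let $a,b\in\mathbb{Q}_3$ with $\gamma(a)=\gamma(b)=0$ and $a_0=1$. Then $x=\sum_{k\ge0}x_k3^k\in\mathbb{Z}_3^*$ is a solution of $x^3+ax=b$ if and only if the congruences $$x_0^3+a_0x_0\equiv b_0 \pmod 3,$$ $$x_1a_0+x_0a_1+N_1(x_0)+M_1(x_0)\equiv b_1\pmod 3,$$ $$x_ka_0+x_{k-1}a_1+\dots+x_0a_k+x_0^2x_{k-1}+N_k(x_0,\dots,x_{k-1})+M_k(x_0,\dots,x_{k-1})\equiv b_k\pmod 3,\quad k\ge2,$$ are fulfilled, where the integers $M_k(x_0,\dots,x_{k-1})$ are defined successively by $$x_0^3+a_0x_0=b_0+3M_1(x_0),$$ $$x_1a_0+x_0a_1+N_1(x_0)=b_1-M_1(x_0)+3M_2(x_0,x_1),$$ $$x_{k-1}a_0+x_{k-2}a_1+\dots+x_0a_{k-1}+x_0^2x_{k-2}+N_{k-1}(x_0,\dots,x_{k-2})=b_{k-1}-M_{k-1}(x_0,\dots,x_{k-2})+3M_k(x_0,\dots,x_{k-1}),\quad k\ge3.$$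
   Context: Every nonzero $3$-adic number has a unique canonical form; write $a=3^{\gamma(a)}(a_0+a_13+a_23^2+\dots)$, $b=3^{\gamma(b)}(b_0+b_13+b_23^2+\dots)$ with digits $a_j,b_j\in\{0,1,2\}$, $a_0,b_0\ne0$, and $\gamma(a),\gamma(b)\in\mathbb{Z}$ the valuations. $\mathbb{Z}_3^*$ is the set of $3$-adic units; an element $x\in\mathbb{Z}_3^*$ is written $x=x_0+x_13+x_23^2+\dots$ with $x_j\in\{0,1,2\}$, $x_0\neq0$. For $k\ge1$, $$N_k(x_0,\dots,x_{k-1})=\sum \frac{3!}{m_0!m_1!\cdots m_{k-1}!}x_0^{m_0}x_1^{m_1}\cdots x_{k-1}^{m_{k-1}},$$ the sum over nonnegative integers $m_0,\dots,m_{k-1}$ with $\sum_{i=0}^{k-1}m_i=3$ and $\sum_{i=1}^{k-1}im_i=k$; in particular $N_1=0$. (These satisfy $(\sum_i x_i3^i)^3=x_0^3+\sum_{k\ge1}(3x_0^2x_k+N_k)3^k$.) *)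

(* Defs.v *)
From HB Require Import structures.
From mathcomp Require Import all_boot all_order all_algebra.
Set Implicit Arguments. Unset Strict Implicit. Unset Printing Implicit Defensive.
Import Order.TTheory GRing.Theory Num.Theory.
Local Open Scope ring_scope.

(* A 3-adic integer z = z_0 + z_1 3 + z_2 3^2 + ... given by its digits. *)
Definition digits3 := nat -> 'I_3.

Definition dig (z : digits3) (i : nat) : int := Posz (z i).

Definition trunc3 (z : digits3) (n : nat) : int :=
  \sum_(i < n) dig z i * 3 ^+ i.

(* Equality of 3-adic integers u = v, where u and v are given as limits of the
   integer sequences U n, V n (Z_3 = projective limit of Z/3^n). *)
Definition padic_eq (U V : nat -> int) : Prop :=
  forall n : nat, (U n = V n %[mod (3 ^+ n)%R])%Z.

Definition is_solution (a b x : digits3) : Prop :=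
  padic_eq (fun n => trunc3 x n ^+ 3 + trunc3 a n * trunc3 x n)
           (fun n => trunc3 b n).

(* N_k(x_0,...,x_{k-1}) = sum over (m_0..m_{k-1}) with sum m_i = 3 and
   sum i m_i = k of 3!/(m_0!...m_{k-1}!) x_0^{m_0}...x_{k-1}^{m_{k-1}}.
   (Each m_i <= 3 since they sum to 3, so m ranges over 'I_k -> 'I_4.) *)
Definition Nk (k : nat) (x : nat -> int) : int :=
  \sum_(m : {ffun 'I_k -> 'I_4} |
          ((\sum_(i < k) (m i : nat) == 3)%N && (\sum_(i < k) (i * m i) == k)%N))
    (Posz (3`! %/ \prod_(i < k) (m i)`!)%N * \prod_(i < k) x i ^+ (m i)).

Definition Sk (a x : digits3) (k : nat) : int :=
  if k is 0%N then dig x 0 ^+ 3 + dig a 0 * dig x 0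
  else \sum_(i < k.+1) dig x (k - i)%N * dig a i
       + (if (2 <= k)%N then dig x 0 ^+ 2 * dig x k.-1 else 0)
       + Nk k (dig x).

(* M_0 = 0 (convention), and S_{k} = b_k - M_k + 3 M_{k+1}, i.e.
   M_{k+1} = (S_k - b_k + M_k) / 3  (an exact division whenever the previous
   congruences hold). *)
Fixpoint Mk (a b x : digits3) (k : nat) : int :=
  match k with
  | 0%N => 0
  | k'.+1 => ((Sk a x k' - dig b k' + Mk a b x k') %/ 3)%Z
  end.

(* Main.v *)
Require Import Defs.
From HB Require Import structures.
From mathcomp Require Import all_boot all_order all_algebra.
From mathcomp Require Import zify ring lra.
Import Order.TTheory GRing.Theory Num.Theory.
Local Open Scope ring_scope.

Lemma fact_dvd k (F : 'I_k -> nat) :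
  (\prod_(i < k) (F i)`! %| (\sum_(i < k) F i)`!)%N.
Proof.
elim: k F => [|k IH] F; first by rewrite !big_ord0.
rewrite !big_ord_recr /=.
apply: dvdn_trans (dvdn_mul (IH (fun i => F (widen_ord (leqnSn k) i))) (dvdnn (F ord_max)`!)) _.
set S := (\sum_(i < k) _)%N.
rewrite -(bin_fact (leq_addl S (F ord_max))) addnK mulnC [((F _)`! * _)%N]mulnC.
exact: dvdn_mull.
Qed.

Definition extf k (j : 'I_4) (g : {ffun 'I_k -> 'I_4}) : {ffun 'I_k.+1 -> 'I_4} :=
  [ffun i : 'I_k.+1 => match unlift ord_max i with Some i' => g i' | None => j end].
Arguments extf {k}.

Lemma widen_lift k (i : 'I_k) : widen_ord (leqnSn k) i = lift ord_max i.
Proof. by apply: val_inj; rewrite /= /bump leqNgt ltn_ord. Qed.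

Lemma extf_max k j (g : {ffun 'I_k -> 'I_4}) : extf j g ord_max = j.
Proof. by rewrite /extf ffunE unlift_none. Qed.

Lemma extf_widen k j (g : {ffun 'I_k -> 'I_4}) i :
  extf j g (widen_ord (leqnSn k) i) = g i.
Proof. by rewrite /extf ffunE widen_lift liftK. Qed.

Definition extp k (p : 'I_4 * {ffun 'I_k -> 'I_4}) := extf p.1 p.2.
Definition unextp k (m : {ffun 'I_k.+1 -> 'I_4}) : 'I_4 * {ffun 'I_k -> 'I_4} :=
  (m ord_max, [ffun i => m (widen_ord (leqnSn k) i)]).

Lemma extp_bij k : bijective (@extp k).
Proof.
exists (@unextp k).
  case=> j g; rewrite /unextp /extp /= extf_max; congr (_, _).
  by apply/ffunP => i; rewrite ffunE extf_widen.
move=> m; apply/ffunP => i; rewrite /unextp /extp /extf /= ffunE.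
by case: unliftP => [i'|] ->; rewrite ?ffunE ?widen_lift.
Qed.

Lemma multinom (R : comNzRingType) k (y : 'I_k -> R) s : (s <= 3)%N ->
  \sum_(m : {ffun 'I_k -> 'I_4} | (\sum_(i < k) (m i : nat) == s)%N)
     ((s`! %/ \prod_(i < k) (m i)`!)%N%:R * \prod_(i < k) y i ^+ m i)
  = (\sum_(i < k) y i) ^+ s.
Proof.
elim: k y s => [|k IH] y s hs.
  rewrite big_mkcond /=.
  rewrite (eq_bigr (fun _ => if (0 == s)%N then 1 else 0)); last first.
    by move=> m _; rewrite !big_ord0 divn1 mulr1; case: (s) => [|s'] //=.
  rewrite sumr_const card_ffun !card_ord expn0 big_ord0.
  by case: s hs => [|s] _ //=; rewrite ?expr0 ?expr0n.
rewrite big_mkcond /= (reindex (@extp k)); last by apply: onW_bij; apply: extp_bij.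
set y' := fun i : 'I_k => y (widen_ord (leqnSn k) i).
set I := fun j : nat => \sum_(g : {ffun 'I_k -> 'I_4})
   (if (\sum_(i < k) (g i : nat) + j == s)%N then
      ((s`! %/ (\prod_(i < k) (g i)`! * j`!))%N%:R * ((\prod_(i < k) y' i ^+ g i) * y ord_max ^+ j))
    else 0).
transitivity (\sum_(j < 4) I j).
  rewrite /I pair_bigA /=; apply: eq_bigr => [[j g]] _ /=.
  rewrite /extp /= !big_ord_recr /= !extf_max.
  under eq_bigr do rewrite extf_widen.
  under [in X in X%:R]eq_bigr do rewrite extf_widen.
  under [in X in _ * X]eq_bigr do rewrite extf_widen.
  by [].
have I0 : forall j, (s < j)%N -> I j = 0.
  move=> j hj; rewrite /I big1 // => g _.
  by case: eqP => // E; exfalso; lia.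
have Ij : forall j, (j <= s)%N ->
    I j = ((\sum_(i < k) y' i) ^+ (s - j) * y ord_max ^+ j) *+ 'C(s, j).
  move=> j hj; rewrite -(IH y' (s - j)%N); last by lia.
  rewrite big_mkcond /= mulr_suml -sumrMnl /I.
  apply: eq_bigr => g _.
  have -> : (\sum_(i < k) (g i : nat) + j == s)%N = (\sum_(i < k) (g i : nat) == s - j)%N.
    by apply/eqP/eqP; lia.
  case: eqP => [E|_]; last by rewrite mul0r mul0rn.
  have := @fact_dvd k (fun i => (g i : nat)); rewrite /= E => /dvdnP [q Hq].
  have Hs : s`! = ('C(s, j) * q * (\prod_(i < k) (g i)`! * j`!))%N.
    by rewrite -(bin_fact hj) Hq; ring.
  have Pp : (0 < \prod_(i < k) (g i)`!)%N by rewrite prodn_gt0 // => i; rewrite fact_gt0.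
  rewrite Hs Hq mulnK ?mulnK // ?muln_gt0 ?Pp ?fact_gt0 //.
  rewrite natrM -mulr_natl; ring.
rewrite [in RHS]big_ord_recr /= exprDn.
rewrite (eq_bigr (fun i : 'I_s.+1 => I i)); last first.
  by move=> i _; rewrite Ij // -ltnS.
rewrite [RHS](big_ord_widen 4 I); last by lia.
rewrite [RHS]big_mkcond /=; apply: eq_bigr => i _.
by case: ltnP => // hi; rewrite I0.
Qed.

Definition Pd (x : digits3) (n : nat) : {poly int} := \poly_(i < n) dig x i.

Lemma trunc_horner x n : trunc3 x n = (Pd x n).[3].
Proof. by rewrite /Pd horner_poly /trunc3. Qed.

Lemma coef_Pd x n i : (Pd x n)`_i = if (i < n)%N then dig x i else 0.
Proof. by rewrite /Pd coef_poly. Qed.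

Lemma Pd_def x n : Pd x n = \sum_(i < n) (dig x i)%:P * 'X^i.
Proof. by rewrite /Pd poly_def; apply: eq_bigr => i _; rewrite mul_polyC. Qed.

Lemma prod_mono k (c : nat -> int) (m : {ffun 'I_k -> 'I_4}) :
  \prod_(i < k) ((c i)%:P * 'X^i) ^+ m i =
  (\prod_(i < k) c i ^+ m i)%:P * 'X^(\sum_(i < k) (i * m i)%N).
Proof.
rewrite (eq_bigr (fun i : 'I_k => (c i ^+ m i)%:P * 'X^(i * m i))); last first.
  by move=> i _; rewrite exprMn -exprM rmorphXn.
rewrite big_split /= -prodrXr; congr (_ * _).
by rewrite rmorph_prod.
Qed.

Lemma Nk_coef x k : Nk k (dig x) = ((Pd x k) ^+ 3)`_k.
Proof.
rewrite Pd_def -(@multinom _ k (fun i : 'I_k => (dig x i)%:P * 'X^i) 3) //.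
rewrite coef_sum /Nk big_mkcond [RHS]big_mkcond /=.
apply: eq_bigr => m _.
case: (\sum_(i < k) (m i : nat) == 3)%N => //=.
rewrite prod_mono; set c := (3`! %/ _)%N; set w := (\sum_(i < k) _)%N.
rewrite mulrA -[c%:R]polyC_natr -rmorphM coefMXn coefC.
case: (ltnP k w) => h.
  by rewrite ifN //; apply/eqP => e; rewrite e ltnn in h.
case: eqP => [->|ne]; rewrite ?subnn /= ?eqxx.
  by rewrite natz.
by rewrite subn_eq0 ifN //; apply/negP => h2; apply: ne; apply/eqP; rewrite eqn_leq h h2.
Qed.

Lemma cube_trunc (q r : {poly int}) m k : (k < m)%N ->
  ((q + r * 'X^m) ^+ 3)`_k = (q ^+ 3)`_k.
Proof.
move=> hk.
have -> : (q + r * 'X^m) ^+ 3 = q ^+ 3 +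
   (r * (q * q *+ 3 + q * r * 'X^m *+ 3 + r * r * 'X^m * 'X^m)) * 'X^m by ring.
by rewrite coefD coefMXn hk addr0.
Qed.

Lemma Pd_split x n m : (m <= n)%N -> Pd x n = Pd x m + drop_poly m (Pd x n) * 'X^m.
Proof.
move=> hmn; rewrite -{1}(poly_take_drop m (Pd x n)); congr (_ + _).
apply/polyP => i; rewrite coef_take_poly !coef_Pd.
by case: ltnP => // h; rewrite (leq_trans h hmn).
Qed.

Lemma Pd_S x k : Pd x k.+1 = Pd x k + (dig x k)%:P * 'X^k.
Proof.
apply/polyP => i; rewrite coefD coefCM coefXn !coef_Pd ltnS.
by case: (ltngtP i k) => [h|h|->]; rewrite ?mulr0 ?mulr1 ?addr0 ?add0r.
Qed.

Lemma Pd0 x : Pd x 0 = 0.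
Proof. by apply/polyP => i; rewrite coef_Pd coef0. Qed.

Lemma coef_cube x n k : (k < n)%N -> ((Pd x n) ^+ 3)`_k =
  if k is 0 then dig x 0 ^+ 3 else Nk k (dig x) + dig x 0 ^+ 2 * dig x k *+ 3.
Proof.
move=> hk; rewrite (@Pd_split x n k.+1) // cube_trunc // Pd_S.
case: k hk => [|k] hk.
  by rewrite Pd0 add0r expr0 mulr1 -rmorphXn coefC.
set P := Pd x k.+1; set C := (dig x k.+1)%:P.
have -> : (P + C * 'X^(k.+1)) ^+ 3 = P ^+ 3 + (C * (P * P)) *+ 3 * 'X^(k.+1)
   + (C * C * P *+ 3 + C ^+ 3 * 'X^(k.+1)) * 'X^(k.+1 + k.+1).
  by rewrite exprD; ring.
rewrite !coefD !coefMXn ltnn subnn ifT; last by lia.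
rewrite addr0 -Nk_coef coefMn !coef0M coefC /= !coef_Pd /=.
by congr (_ + _); congr (_ *+ 3); ring.
Qed.

Definition ck (a x : digits3) (k : nat) : int :=
  if k is 0 then Sk a x 0 else
  \sum_(i < k.+1) dig x (k - i)%N * dig a i + dig x 0 ^+ 2 * dig x k *+ 3 + Nk k (dig x).

Lemma coef_Q a x n k : (k < n)%N -> (Pd x n ^+ 3 + Pd a n * Pd x n)`_k = ck a x k.
Proof.
move=> hk; rewrite coefD coef_cube // coefM.
have E : \sum_(j < k.+1) (Pd a n)`_j * (Pd x n)`_(k - j) =
         \sum_(j < k.+1) dig x (k - j)%N * dig a j.
  apply: eq_bigr => j _; have hj := ltn_ord j.
  have h1 : (j < n)%N by lia.
  have h2 : (k - j < n)%N by lia.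
  by rewrite !coef_Pd h1 h2 mulrC.
rewrite E; case: k hk {E} => [|k] hk.
  by rewrite big_ord1 /ck /Sk subn0; ring.
by rewrite /ck; ring.
Qed.

Lemma ck_Sk a x k : ck a x k = Sk a x k + (if k is 0 then 0 else dig x 0 ^+ 2 * dig x k *+ 3)
   - (if (2 <= k)%N then dig x 0 ^+ 2 * dig x k.-1 else 0).
Proof.
case: k => [|k]; rewrite /ck /Sk; first by rewrite addr0 subr0.
by case: k => [|k]; ring.
Qed.

Lemma ck_S a x n : \sum_(k < n) ck a x k * 3 ^+ k =
  \sum_(k < n) Sk a x k * 3 ^+ k + (if (2 <= n)%N then dig x 0 ^+ 2 * dig x n.-1 * 3 ^+ n else 0).
Proof.
elim: n => [|n IH]; first by rewrite !big_ord0 addr0.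
rewrite !big_ord_recr IH ck_Sk.
case: n {IH} => [|[|n]]; rewrite ?expr0 ?expr1 /=; try ring.
rewrite !exprS; ring.
Qed.

Lemma poly_sum n (p : {poly int}) : (3 ^+ n %| p.[3] - \sum_(i < n) p`_i * 3 ^+ i)%Z.
Proof.
rewrite -{1}(poly_take_drop n p) hornerD hornerM hornerXn.
rewrite (horner_coef_wide _ (size_take_poly _ _)).
rewrite (eq_bigr (fun i : 'I_n => p`_i * 3 ^+ i)); last first.
  by move=> i _; rewrite coef_take_poly ltn_ord.
by rewrite addrAC subrr add0r dvdz_mull.
Qed.

Lemma key a b x n :
  (3 ^+ n %| (trunc3 x n ^+ 3 + trunc3 a n * trunc3 x n - trunc3 b n)
     - \sum_(k < n) (Sk a x k - dig b k) * 3 ^+ k)%Z.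
Proof.
have := poly_sum n (Pd x n ^+ 3 + Pd a n * Pd x n).
rewrite !hornerE -!trunc_horner.
rewrite (eq_bigr (fun k : 'I_n => ck a x k * 3 ^+ k)); last first.
  by move=> k _; rewrite coef_Q.
rewrite ck_S.
set e := (if _ then _ else _) => H.
have -> : trunc3 b n = \sum_(k < n) dig b k * 3 ^+ k by [].
have -> : \sum_(k < n) (Sk a x k - dig b k) * 3 ^+ k =
   \sum_(k < n) Sk a x k * 3 ^+ k - \sum_(k < n) dig b k * 3 ^+ k.
  by rewrite -sumrB; apply: eq_bigr => k _; rewrite mulrBl.
set U := trunc3 x n ^+ 3 + trunc3 a n * trunc3 x n.
set S1 := \sum_(k < n) Sk a x k * 3 ^+ k.
set S2 := \sum_(k < n) dig b k * 3 ^+ k.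
have -> : U - S2 - (S1 - S2) = (U - (S1 + e)) + e by ring.
apply: rpredD => //.
rewrite /e; case: ifP => _; last exact: dvdz0.
exact: dvdz_mull.
Qed.

Lemma carry a b x n :
  (forall k, (k < n)%N -> (Sk a x k + Mk a b x k = dig b k %[mod 3])%Z) ->
  \sum_(k < n) (Sk a x k - dig b k) * 3 ^+ k = Mk a b x n * 3 ^+ n.
Proof.
elim: n => [|n IH] H; first by rewrite big_ord0 mul0r.
rewrite big_ord_recr IH; last by move=> k hk; apply: H; lia.
have := H n (ltnSn n) => /eqP; rewrite eqz_mod_dvd => D.
have D' : (3 %| Sk a x n - dig b n + Mk a b x n)%Z.
  by have -> : Sk a x n - dig b n + Mk a b x n = Sk a x n + Mk a b x n - dig b n by ring.
rewrite [Mk a b x n.+1]/= exprSr mulrA mulrAC divzK //.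
rewrite (_ : nat_of_ord (@ord_max n) = n) //.
by rewrite [RHS]mulrDl [RHS]addrC.
Qed.

Theorem theorem3p1 (a b x : digits3) :
  (a 0%N : nat) = 1%N -> (b 0%N : nat) <> 0%N -> (x 0%N : nat) <> 0%N ->
  (is_solution a b x <->
   forall k : nat, (Sk a x k + Mk a b x k = dig b k %[mod 3])%Z).
Proof.
move=> _ _ _; split.
  move=> sol.
  suff : forall n k, (k < n)%N -> (Sk a x k + Mk a b x k = dig b k %[mod 3])%Z.
    by move=> h k; apply: (h k.+1).
  elim=> [|n IH] k hk; first by [].
  have [hkn|->] : (k < n)%N \/ k = n by lia.
    exact: IH.
  have C := @carry a b x n IH.
  have S := sol n.+1; move/eqP: S; rewrite eqz_mod_dvd => S.
  have K := key a b x n.+1.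
  have T : (3 ^+ n.+1 %| \sum_(k < n.+1) (Sk a x k - dig b k) * 3 ^+ k)%Z.
    move: S K; set u := (_ - trunc3 b n.+1); set s := \sum_(k < n.+1) _ => S K.
    have E : s = u - (u - s) by ring.
    by rewrite E rpredB.

  move: T; rewrite big_ord_recr C (_ : nat_of_ord (@ord_max n) = n) //.
  set X := (X in (_ %| X)%Z).
  have EX : X = 3 ^+ n * (Mk a b x n + (Sk a x n - dig b n)).
    rewrite [RHS]mulrDr [3 ^+ n * Mk a b x n]mulrC [3 ^+ n * (_ - _)]mulrC.
    by [].
  rewrite EX exprSr dvdz_mul2l ?expf_neq0 // => T.
  apply/eqP; rewrite eqz_mod_dvd.
  by have -> : Sk a x n + Mk a b x n - dig b n = Mk a b x n + (Sk a x n - dig b n) by ring.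
move=> H n; apply/eqP; rewrite eqz_mod_dvd.
have K := key a b x n.
rewrite carry in K; last by move=> k _; apply: H.
move: K; set u := (_ - trunc3 b n); set s := (Mk a b x n * 3 ^+ n) => K.
have -> : u = (u - s) + s by ring.
by rewrite rpredD // dvdz_mull.
Qed.
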